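(* Let $L_f>8\alpha>0$ and $\epsilon>0$ be given. There exists an infinite-dimensional smooth problem of the form described in the context with aggregate smoothness constant $L_f$ and with $u$ having strong convexity modulus $\alpha$, such that any DPM algorithm requires at least $\Omega(\sqrt{L_f/\alpha}\log(1/\epsilon))$ communication rounds to find an $\epsilon$-close solution, i.e. a point $x$ with $\|x-x^*\|^2\le\epsilon$ (the dependence on $R_0\ge\|x^0-x^*\|$ inside the logarithm being ignored).
   Context: Problem form: $\min_{x\in X}\{f(x):=\max_{p\in P}\sum_{i=1}^mp_if_i(x)-\rho^*(p)+u(x)\}$ with $X$ a closed convex subset of the (possibly infinite-dimensional) Euclidean space of variables, $P\subseteq\{p\in\mathbb{R}^m:\sum_ip_i=1,p\ge0\}$ closed convex, $\rho^*$, $u$ proper closed convex, and $f_i(x)=\max_{\pi_i\in\Pi_i}\langle A_ix,\pi_i\rangle-f_i^*(\pi_i)$; smooth means $A_i=I$, $f_i$ convex with Lipschitz gradient and $f_i^*$ its conjugate. $x^*$ is the optimal solution. The aggregate smoothness constant is $\max_{p\in P}L_p$, where $L_p$ is the Lipschitz constant of $\nabla\sum_ip_if_i$. $x^0=0$. A DPM algorithm on a star network (server plus workers, worker $i$ knowing only $f_i$, server knowing $u$, $\rho^*$, $P$) maintains a server memory and, for each worker, primal and dual memories, all $\{0\}$ initially. In each communication round each worker sends one vector from the span of its primal memory to the server and receives one vector from the span of the server memory; between rounds each worker may, any finite number of times, pick $\bar x$ in the span of its primal memory, $\bar\pi_i$ in the span of its dual memory, $\tau\ge0$, compute $\pi_i'\in\arg\max_{\pi_i\in\Pi_i}\langle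 A_i\bar x,\pi_i\rangle-f_i^*(\pi_i)-\frac\tau2\|\pi_i-\bar\pi_i\|^2$, add $A_i^\top\pi_i',A_i^\top\bar\pi_i$ to its primal memory and $\pi_i',A_i\bar x$ to its dual memory; the server may, any finite number of times, add $\arg\min_{x\in X}u(x)+\frac\eta2\|x-\bar x\|^2$ for $\bar x$ in the span of its memory and $\eta>0$. The output after $t$ rounds lies in the span of all primal memories and the server memory. $\Omega$ hides absolute constants. *)

(* Defs.v *)
From Stdlib Require Import Reals List.
From Coquelicot Require Import Coquelicot.
Open Scope R_scope.

Definition vec := nat -> R.
Definition vzero : vec := fun _ => 0.
Definition vadd (x y : vec) : vec := fun k => x k + y k.
Definition vsub (x y : vec) : vec := fun k => x k - y k.
Definition vcomb (l : R) (x y : vec) : vec := fun k => l * x k + (1 - l) * y k.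

Definition is_l2 (x : vec) : Prop := ex_series (fun k => x k ^ 2).
Definition l2inner (x y : vec) : R := Series (fun k => x k * y k).
Definition l2norm2 (x : vec) : R := Series (fun k => x k ^ 2).
Definition l2norm (x : vec) : R := sqrt (l2norm2 x).

Fixpoint sumR (m : nat) (a : nat -> R) : R :=
  match m with O => 0 | S n => sumR n a + a n end.

Definition lincomb (l : list (R * vec)) : vec :=
  fold_right (fun p acc => fun k => fst p * snd p k + acc k) vzero l.
Definition in_span (M : vec -> Prop) (v : vec) : Prop :=
  exists l : list (R * vec), (forall p, In p l -> M (snd p)) /\
                             forall k, v k = lincomb l k.

Definition l2_set_closed (X : vec -> Prop) : Prop :=
  forall (xs : nat -> vec) (x : vec), (forall n, X (xs n)) -> is_l2 x ->
    is_lim_seq (fun n => l2norm2 (vsub (xs n) x)) 0 -> X x.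
Definition l2_set_convex (X : vec -> Prop) : Prop :=
  forall x y l, X x -> X y -> 0 <= l <= 1 -> X (vcomb l x y).

Definition proper_l2 (u : vec -> Rbar) : Prop :=
  (forall x, is_l2 x -> u x <> m_infty) /\ exists x, is_l2 x /\ is_finite (u x).
Definition closed_l2 (u : vec -> Rbar) : Prop :=
  forall (xs : nat -> vec) x (rs : nat -> R) r,
    (forall n, is_l2 (xs n)) -> is_l2 x ->
    is_lim_seq (fun n => l2norm2 (vsub (xs n) x)) 0 -> is_lim_seq rs r ->
    (forall n, Rbar_le (u (xs n)) (Finite (rs n))) -> Rbar_le (u x) (Finite r).
Definition strongly_convex_l2 (u : vec -> Rbar) (a : R) : Prop :=
  forall x y l, is_l2 x -> is_l2 y -> 0 < l < 1 ->
    Rbar_le (u (vcomb l x y))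
      (Rbar_plus (Rbar_plus (Rbar_mult l (u x)) (Rbar_mult (1 - l) (u y)))
                 (Finite (- (a / 2) * l * (1 - l) * l2norm2 (vsub x y)))).
Definition convex_l2 (u : vec -> Rbar) : Prop := strongly_convex_l2 u 0.
Definition strong_convexity_modulus (u : vec -> Rbar) (a : R) : Prop :=
  strongly_convex_l2 u a /\ forall a', a < a' -> ~ strongly_convex_l2 u a'.

Definition convex_fun_l2 (f : vec -> R) : Prop :=
  forall x y l, is_l2 x -> is_l2 y -> 0 <= l <= 1 ->
    f (vcomb l x y) <= l * f x + (1 - l) * f y.
Definition is_gradient_l2 (f : vec -> R) (g : vec -> vec) : Prop :=
  forall x, is_l2 x -> is_l2 (g x) /\
    forall e, 0 < e -> exists d, 0 < d /\ forall h, is_l2 h -> l2norm h < d ->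
      Rabs (f (vadd x h) - f x - l2inner (g x) h) <= e * l2norm h.
Definition lipschitz_l2 (G : vec -> vec) (L : R) : Prop :=
  forall x y, is_l2 x -> is_l2 y ->
    l2norm (vsub (G x) (G y)) <= L * l2norm (vsub x y).
Definition fconj (f : vec -> R) (pi : vec) : Rbar :=
  Lub_Rbar (fun r => exists x, is_l2 x /\ r = l2inner x pi - f x).

(** * Finite-dimensional part: R^m, represented by sequences vanishing from m on *)
Definition in_Rm (m : nat) (p : vec) : Prop := forall k, (m <= k)%nat -> p k = 0.
Definition in_simplex (m : nat) (p : vec) : Prop :=
  in_Rm m p /\ (forall i, (i < m)%nat -> 0 <= p i) /\ sumR m p = 1.
Definition Rm_set_closed (m : nat) (P : vec -> Prop) : Prop :=
  forall (ps : nat -> vec) p, (forall n, P (ps n)) -> in_Rm m p ->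
    (forall i, is_lim_seq (fun n => ps n i) (p i)) -> P p.
Definition Rm_set_convex (m : nat) (P : vec -> Prop) : Prop :=
  forall p q l, P p -> P q -> 0 <= l <= 1 -> P (vcomb l p q).
Definition proper_Rm (m : nat) (rho : vec -> Rbar) : Prop :=
  (forall p, in_Rm m p -> rho p <> m_infty) /\ exists p, in_Rm m p /\ is_finite (rho p).
Definition closed_Rm (m : nat) (rho : vec -> Rbar) : Prop :=
  forall (ps : nat -> vec) p (rs : nat -> R) r,
    (forall n, in_Rm m (ps n)) -> in_Rm m p ->
    (forall i, is_lim_seq (fun n => ps n i) (p i)) -> is_lim_seq rs r ->
    (forall n, Rbar_le (rho (ps n)) (Finite (rs n))) -> Rbar_le (rho p) (Finite r).
Definition convex_Rm (m : nat) (rho : vec -> Rbar) : Prop :=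
  forall p q l, in_Rm m p -> in_Rm m q -> 0 < l < 1 ->
    Rbar_le (rho (vcomb l p q))
            (Rbar_plus (Rbar_mult l (rho p)) (Rbar_mult (1 - l) (rho q))).

(** * The smooth problem
   min_{x in X} max_{p in P} sum_i p_i f_i(x) - rho^*(p) + u(x),
   with A_i = I, Pi_i = l^2, f_i convex with Lipschitz gradient g_i. *)
Definition smooth_problem (m : nat) (P : vec -> Prop) (rho : vec -> Rbar)
    (X : vec -> Prop) (u : vec -> Rbar) (f : nat -> vec -> R) (g : nat -> vec -> vec) : Prop :=
  (forall p, P p -> in_simplex m p) /\ Rm_set_closed m P /\ Rm_set_convex m P /\
  proper_Rm m rho /\ closed_Rm m rho /\ convex_Rm m rho /\
  (forall x, X x -> is_l2 x) /\ l2_set_closed X /\ l2_set_convex X /\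
  proper_l2 u /\ closed_l2 u /\ convex_l2 u /\
  (forall i, (i < m)%nat ->
     convex_fun_l2 (f i) /\ is_gradient_l2 (f i) (g i) /\ exists L, lipschitz_l2 (g i) L).

Definition agg_grad (m : nat) (g : nat -> vec -> vec) (p : vec) : vec -> vec :=
  fun x k => sumR m (fun i => p i * g i x k).

Definition aggregate_smoothness (m : nat) (P : vec -> Prop) (g : nat -> vec -> vec)
    (Lf : R) : Prop :=
  (forall p, P p -> lipschitz_l2 (agg_grad m g p) Lf) /\
  exists p, P p /\ forall L', L' < Lf -> ~ lipschitz_l2 (agg_grad m g p) L'.

Definition objective (m : nat) (P : vec -> Prop) (rho : vec -> Rbar) (u : vec -> Rbar)
    (f : nat -> vec -> R) (x : vec) : Rbar :=
  Rbar_plus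
    (Lub_Rbar (fun r => exists p r', P p /\ rho p = Finite r' /\
                                     r = sumR m (fun i => p i * f i x) - r'))
    (u x).

Definition optimal_solution (m : nat) (P : vec -> Prop) (rho : vec -> Rbar)
    (X : vec -> Prop) (u : vec -> Rbar) (f : nat -> vec -> R) (xs : vec) : Prop :=
  X xs /\ is_finite (objective m P rho u f xs) /\
  forall y, X y -> Rbar_le (objective m P rho u f xs) (objective m P rho u f y).

Record dpm_state := mkState {
  srv  : vec -> Prop;
  pmem : nat -> vec -> Prop;
  dmem : nat -> vec -> Prop }.

Definition init_state : dpm_state :=
  mkState (fun y => y = vzero) (fun _ y => y = vzero) (fun _ y => y = vzero).

Definition dual_obj (fi : vec -> R) (xb pb : vec) (tau : R) (q : vec) : Rbar :=
  Rbar_minus (Finite (l2inner xb q - tau / 2 * l2norm2 (vsub q pb))) (fconj fi q).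
Definition dual_argmax (fi : vec -> R) (xb pb : vec) (tau : R) (p' : vec) : Prop :=
  is_l2 p' /\ is_finite (fconj fi p') /\
  forall q, is_l2 q -> Rbar_le (dual_obj fi xb pb tau q) (dual_obj fi xb pb tau p').

Definition prox_argmin (X : vec -> Prop) (u : vec -> Rbar) (eta : R) (xb x' : vec) : Prop :=
  X x' /\ is_finite (u x') /\
  forall y, X y ->
    Rbar_le (Rbar_plus (u x') (Finite (eta / 2 * l2norm2 (vsub x' xb))))
            (Rbar_plus (u y) (Finite (eta / 2 * l2norm2 (vsub y xb)))).

Definition worker_step (m : nat) (f : nat -> vec -> R) (s s' : dpm_state) : Prop :=
  exists i xb pb tau p', (i < m)%nat /\
    in_span (pmem s i) xb /\ in_span (dmem s i) pb /\ 0 <= tau /\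
    dual_argmax (f i) xb pb tau p' /\
    s' = mkState (srv s)
           (fun j y => pmem s j y \/ (j = i /\ (y = p' \/ y = pb)))
           (fun j y => dmem s j y \/ (j = i /\ (y = p' \/ y = xb))).

Definition server_step (X : vec -> Prop) (u : vec -> Rbar) (s s' : dpm_state) : Prop :=
  exists xb eta x', in_span (srv s) xb /\ 0 < eta /\ prox_argmin X u eta xb x' /\
    s' = mkState (fun y => srv s y \/ y = x') (pmem s) (dmem s).

(** one communication round: every worker i uploads v i from the span of its primal
    memory; then every worker downloads w i from the span of the server memory
    (which already contains the uploads of this round). *)
Definition comm_step (m : nat) (s s' : dpm_state) : Prop :=
  exists v w : nat -> vec,
    (forall i, (i < m)%nat -> in_span (pmem s i) (v i)) /\
    (forall i, (i < m)%nat ->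
       in_span (fun y => srv s y \/ exists j, (j < m)%nat /\ y = v j) (w i)) /\
    s' = mkState (fun y => srv s y \/ exists j, (j < m)%nat /\ y = v j)
                 (fun j y => pmem s j y \/ ((j < m)%nat /\ y = w j))
                 (dmem s).

Inductive reach (m : nat) (X : vec -> Prop) (u : vec -> Rbar) (f : nat -> vec -> R)
  : nat -> dpm_state -> Prop :=
| reach_init : reach m X u f 0 init_state
| reach_worker : forall t s s', reach m X u f t s -> worker_step m f s s' -> reach m X u f t s'
| reach_server : forall t s s', reach m X u f t s -> server_step X u s s' -> reach m X u f t s'
| reach_comm : forall t s s', reach m X u f t s -> comm_step m s s' -> reach m X u f (S t) s'.

Definition dpm_output (m : nat) (X : vec -> Prop) (u : vec -> Rbar) (f : nat -> vec -> R)
    (t : nat) (x : vec) : Prop :=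
  exists s, reach m X u f t s /\
    in_span (fun y => srv s y \/ exists i, (i < m)%nat /\ pmem s i y) x.

(* Main.v *)
Require Import Defs.
From Stdlib Require Import Reals List.
From Coquelicot Require Import Coquelicot.
From Stdlib Require Import Lra Lia Arith ClassicalEpsilon Classical FunctionalExtensionality.
Open Scope R_scope.


Lemma sumR_ext M a b : (forall k, (k < M)%nat -> a k = b k) -> sumR M a = sumR M b.
Proof. induction M; simpl; intros H; auto. rewrite IHM by (intros; apply H; lia). rewrite H by lia; auto. Qed.

Lemma sumR_le M a b : (forall k, (k < M)%nat -> a k <= b k) -> sumR M a <= sumR M b.
Proof. induction M; simpl; intros H; [lra|]. assert (a M <= b M) by (apply H; lia).
  assert (sumR M a <= sumR M b) by (apply IHM; intros; apply H; lia). lra. Qed.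

Lemma sumR_lt M a b k0 : (forall k, (k < M)%nat -> a k <= b k) -> (k0 < M)%nat -> a k0 < b k0 ->
  sumR M a < sumR M b.
Proof. induction M; simpl; intros H Hk Hs; [lia|].
  destruct (Nat.eq_dec k0 M).
  - subst. assert (sumR M a <= sumR M b) by (apply sumR_le; intros; apply H; lia). lra.
  - assert (a M <= b M) by (apply H; lia).
    assert (sumR M a < sumR M b). { apply IHM. intros; apply H; lia. lia. auto. } lra. Qed.

Lemma sumR_plus M a b : sumR M (fun k => a k + b k) = sumR M a + sumR M b.
Proof. induction M; simpl; [lra|]. rewrite IHM; lra. Qed.
Lemma sumR_minus M a b : sumR M (fun k => a k - b k) = sumR M a - sumR M b.
Proof. induction M; simpl; [lra|]. rewrite IHM; lra. Qed.
Lemma sumR_scal M c a : sumR M (fun k => c * a k) = c * sumR M a.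
Proof. induction M; simpl; [lra|]. rewrite IHM; lra. Qed.
Lemma sumR_zero M : sumR M (fun _ => 0) = 0.
Proof. induction M; simpl; [lra|]. rewrite IHM; lra. Qed.
Lemma sumR_nonneg M a : (forall k, (k < M)%nat -> 0 <= a k) -> 0 <= sumR M a.
Proof. intros H. rewrite <- (sumR_zero M). apply sumR_le. auto. Qed.

Lemma sumR_tail M M' a : (forall k, (M <= k)%nat -> a k = 0) -> (M <= M')%nat -> sumR M' a = sumR M a.
Proof. intros H Hle. induction Hle; auto. simpl. rewrite IHHle, H by lia. lra. Qed.

Lemma sumR_shift M a : sumR (S M) (fun k => match k with O => 0 | S k' => a k' end) = sumR M a.
Proof. induction M; simpl in *; [lra|]. rewrite IHM. lra. Qed.

Lemma sumR_succ_l M a : sumR (S M) a = a O + sumR M (fun k => a (S k)).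
Proof. induction M; simpl in *; [lra|]. rewrite IHM. lra. Qed.

Lemma term_le_sumR M a k : (forall i, (i < M)%nat -> 0 <= a i) -> (k < M)%nat -> a k <= sumR M a.
Proof. induction M; simpl; intros H Hk; [lia|].
  assert (0 <= sumR M a) by (apply sumR_nonneg; intros; apply H; lia).
  destruct (Nat.eq_dec k M). subst. lra.
  assert (a k <= sumR M a) by (apply IHM; [intros; apply H; lia|lia]). assert (0 <= a M) by (apply H; lia). lra. Qed.

Lemma sumR_single_le M k c : 0 <= c -> sumR M (fun i => if Nat.eqb i k then c else 0) <= c.
Proof. intros Hc. induction M; simpl; [lra|].
  destruct (Nat.eqb M k) eqn:E.
  - apply Nat.eqb_eq in E; subst. rewrite (sumR_ext _ _ (fun _ => 0)). rewrite sumR_zero; lra.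
    intros i Hi. destruct (Nat.eqb i k) eqn:E2; auto. apply Nat.eqb_eq in E2; lia.
  - lra. Qed.

Lemma sum_n_sumR a n : sum_n a n = sumR (S n) a.
Proof. induction n. simpl. rewrite sum_O. lra. rewrite sum_Sn, IHn. simpl. reflexivity. Qed.

Lemma is_series_fin M a : (forall k, (M <= k)%nat -> a k = 0) -> is_series a (sumR M a).
Proof. intros H. unfold is_series.
  apply (filterlim_ext_loc (fun _ => sumR M a)).
  - exists M. intros n Hn. rewrite sum_n_sumR. symmetry. apply sumR_tail; auto.
  - apply filterlim_const. Qed.

Lemma Series_fin M a : (forall k, (M <= k)%nat -> a k = 0) -> Series a = sumR M a.
Proof. intros H. apply is_series_unique, is_series_fin; auto. Qed.
Lemma ex_series_fin M a : (forall k, (M <= k)%nat -> a k = 0) -> ex_series a.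
Proof. intros H. eexists. apply is_series_fin; eauto. Qed.

Lemma fin_l2 M x : in_Rm M x -> is_l2 x.
Proof. intros H. apply (ex_series_fin M). intros k Hk. rewrite H; auto. simpl; ring. Qed.
Lemma fin_norm2 M x : in_Rm M x -> l2norm2 x = sumR M (fun k => x k ^ 2).
Proof. intros H. apply Series_fin. intros k Hk; rewrite H; auto; simpl; ring. Qed.
Lemma fin_inner_l M x y : in_Rm M x -> l2inner x y = sumR M (fun k => x k * y k).
Proof. intros H. apply Series_fin. intros k Hk; rewrite H; auto; simpl; ring. Qed.
Lemma fin_inner_r M x y : in_Rm M y -> l2inner x y = sumR M (fun k => x k * y k).
Proof. intros H. apply Series_fin. intros k Hk; rewrite H; auto; simpl; ring. Qed.

Lemma exs_plus (a b : nat -> R) : ex_series a -> ex_series b -> ex_series (fun n => a n + b n).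
Proof. intros Ha Hb. exact (ex_series_plus a b Ha Hb). Qed.
Lemma exs_scal (c : R) (a : nat -> R) : ex_series a -> ex_series (fun n => c * a n).
Proof. intros Ha. exact (ex_series_scal_l c a Ha). Qed.
Lemma exs_le (a b : nat -> R) : (forall n, 0 <= a n <= b n) -> ex_series b -> ex_series a.
Proof. intros H Hb. apply (@ex_series_le R_AbsRing R_CompleteNormedModule a b); auto.
  intros n. change norm with Rabs. rewrite Rabs_pos_eq; apply H. Qed.

Lemma l2_sub x y : is_l2 x -> is_l2 y -> is_l2 (vsub x y).
Proof. unfold is_l2, vsub. intros Hx Hy.
  apply (exs_le _ (fun k => 2 * x k ^ 2 + 2 * y k ^ 2)).
  - intros n. pose proof (pow2_ge_0 (x n + y n)). pose proof (pow2_ge_0 (x n - y n)). split; nra.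
  - apply exs_plus; apply exs_scal; auto. Qed.

Lemma trunc_le_norm2 M x : is_l2 x -> sumR M (fun k => x k ^ 2) <= l2norm2 x.
Proof. intros H. unfold l2norm2.
  rewrite (sumR_ext _ _ (fun k => if Nat.ltb k M then x k ^ 2 else 0)).
  - rewrite <- (Series_fin M (fun k => if Nat.ltb k M then x k ^ 2 else 0)).
    + apply Series_le; auto. intros n. destruct (Nat.ltb n M); split; try nra; apply pow2_ge_0.
    + intros k Hk. destruct (Nat.ltb k M) eqn:E; auto. apply Nat.ltb_lt in E; lia.
  - intros k Hk. apply Nat.ltb_lt in Hk. rewrite Hk. auto. Qed.

Lemma coord_le_norm2 x k : is_l2 x -> x k ^ 2 <= l2norm2 x.
Proof. intros H. eapply Rle_trans; [|apply (trunc_le_norm2 (S k)); auto].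
  apply (term_le_sumR (S k) (fun k => x k ^ 2)); [intros; nra| lia]. Qed.

Lemma in_Rm_mono n n' x : (n <= n')%nat -> in_Rm n x -> in_Rm n' x.
Proof. intros H Hx k Hk. apply Hx. lia. Qed.

Lemma lincomb_Rm n l : (forall p, In p l -> in_Rm n (snd p)) -> in_Rm n (lincomb l).
Proof. induction l; simpl; intros H k Hk. reflexivity.
  rewrite (H a) by auto. rewrite IHl; auto. ring. Qed.

Lemma span_Rm n (M : vec -> Prop) v : (forall y, M y -> in_Rm n y) -> in_span M v -> in_Rm n v.
Proof. intros H [l [Hl Hv]] k Hk. rewrite Hv. apply (lincomb_Rm n); auto. Qed.

Lemma sumR_S n a : sumR (S n) a = sumR n a + a n.
Proof. reflexivity. Qed.

Lemma sumR_single_eq M k c : (k < M)%nat -> sumR M (fun i => if Nat.eqb i k then c else 0) = c.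
Proof. induction M; intros H; [lia|]. rewrite sumR_S. destruct (Nat.eqb M k) eqn:E.
  - apply Nat.eqb_eq in E; subst. rewrite (sumR_ext _ _ (fun _ => 0)). rewrite sumR_zero; lra.
    intros i Hi. destruct (Nat.eqb i k) eqn:E2; auto. apply Nat.eqb_eq in E2; lia.
  - rewrite IHM. lra. apply Nat.eqb_neq in E. lia. Qed.

Lemma inner_add M u v w : in_Rm M u -> in_Rm M v -> l2inner (vadd u v) w = l2inner u w + l2inner v w.
Proof. intros Hu Hv. rewrite !(fin_inner_l M); auto. rewrite <- sumR_plus. apply sumR_ext. intros; unfold vadd; ring.
  intros k Hk; unfold vadd; rewrite Hu, Hv; auto; ring. Qed.

Lemma ub_fconj (f : vec -> R) p x : is_l2 x -> Rbar_le (Finite (l2inner x p - f x)) (fconj f p).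
Proof. intros Hx. unfold fconj. destruct (Lub_Rbar_correct (fun r => exists x, is_l2 x /\ r = l2inner x p - f x)) as [Hub _].
  apply Hub. exists x; split; auto. Qed.

Lemma fconj_le (f : vec -> R) p B : (forall x, is_l2 x -> l2inner x p - f x <= B) -> Rbar_le (fconj f p) (Finite B).
Proof. intros H. unfold fconj. destruct (Lub_Rbar_correct (fun r => exists x, is_l2 x /\ r = l2inner x p - f x)) as [_ Hl].
  apply Hl. intros r [x [Hx ->]]. simpl. auto. Qed.

Lemma Rbar_mult_pinf l : 0 < l -> Rbar_mult (Finite l) p_infty = p_infty.
Proof. intros H. unfold Rbar_mult, Rbar_mult'. destruct (Rle_dec 0 l); [|lra].
  destruct (Rle_lt_or_eq_dec 0 l r); auto. lra. Qed.

Lemma Lub_single (E : R -> Prop) a : (forall r, E r <-> r = a) -> Lub_Rbar E = Finite a.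
Proof. intros H. apply is_lub_Rbar_unique. split.
  - intros r Hr. apply H in Hr. subst. simpl. lra.
  - intros l Hl. apply Hl. apply H. auto. Qed.

Lemma sumR_lim M (a : nat -> nat -> R) (l : nat -> R) :
  (forall k, (k < M)%nat -> is_lim_seq (fun n => a n k) (l k)) -> is_lim_seq (fun n => sumR M (a n)) (sumR M l).
Proof. induction M; intros H; simpl. apply is_lim_seq_const.
  apply (is_lim_seq_plus' (fun n => sumR M (a n)) (fun n => a n M)). apply IHM; intros; apply H; lia. apply H; lia. Qed.

Lemma lim_sq (u : nat -> R) (l : R) : is_lim_seq u l -> is_lim_seq (fun n => u n ^ 2) (l ^ 2).
Proof. intros H. apply (is_lim_seq_ext (fun n => u n * u n)). intros; ring.
  replace (l ^ 2) with (l * l) by ring. apply is_lim_seq_mult'; auto. Qed.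

Lemma coord_conv (xs : nat -> vec) x k : (forall n, is_l2 (vsub (xs n) x)) ->
  is_lim_seq (fun n => l2norm2 (vsub (xs n) x)) 0 -> is_lim_seq (fun n => xs n k) (x k).
Proof. intros Hl H. apply is_lim_seq_spec. apply is_lim_seq_spec in H. intros eps.
  assert (He: 0 < eps * eps) by (pose proof (cond_pos eps); nra).
  destruct (H (mkposreal _ He)) as [N0 HN0]. exists N0. intros n Hn. specialize (HN0 n Hn). simpl in HN0.
  pose proof (coord_le_norm2 (vsub (xs n) x) k (Hl n)). change (vsub (xs n) x k) with (xs n k - x k) in H0.
  rewrite Rminus_0_r in HN0. pose proof (cond_pos eps).
  assert (l2norm2 (vsub (xs n) x) < eps * eps) by (eapply Rle_lt_trans; [apply Rle_abs|apply HN0]).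
  destruct (Rcase_abs (xs n k - x k)); [rewrite Rabs_left by auto|rewrite Rabs_right by auto]; nra. Qed.

Lemma pow_le_one q k : 0 <= q <= 1 -> q ^ k <= 1.
Proof. intros H. induction k; simpl; [lra|]. pose proof (pow_le q k ltac:(lra)). nra. Qed.


Definition prv (a : nat -> R) (k : nat) : R := match k with O => 0 | S k' => a k' end.

Lemma sbp M a h : sumR M (fun k => a k * h k - prv a k * h k) =
  sumR M (fun k => a k * (h k - h (S k))) + prv a M * h M.
Proof. induction M; simpl; [lra|]. rewrite IHM. destruct M; simpl; ring. Qed.

Definition trunc (n : nat) (x : vec) : vec := fun k => if Nat.ltb k n then x k else 0.
Lemma trunc_Rm n x : in_Rm n (trunc n x).
Proof. intros k Hk. unfold trunc. destruct (Nat.ltb k n) eqn:E; auto. apply Nat.ltb_lt in E; lia. Qed.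

Section Chain.
Variables (Nn : nat) (beta Lf b : R).
Hypothesis HN : (1 <= Nn)%nat.
Hypothesis Hbeta : 0 <= beta.
Hypothesis HLf : 0 <= Lf.

Definition cc (j k : nat) : R :=
  if Nat.ltb (S k) Nn then (if Bool.eqb (Nat.even k) (Nat.eqb j 0) then beta else 0) else 0.
Definition lin (j : nat) : R := if Nat.eqb j 0 then 2 * b else 0.
Definition Qf (j : nat) (h : vec) : R :=
  sumR Nn (fun k => cc j k * (h k - h (S k)) ^ 2) + Lf / 2 * h Nn ^ 2.
Definition fj (j : nat) (x : vec) : R := Qf j x - lin j * x O.
Definition Hop (w : nat -> R) (L : R) (v : vec) : vec := fun k =>
  w k * (v k - v (S k)) - prv (fun i => w i * (v i - v (S i))) k + (if Nat.eqb k Nn then L * v Nn else 0).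
Definition gj (j : nat) (x : vec) : vec := fun k =>
  Hop (fun i => 2 * cc j i) Lf x k - (if Nat.eqb k O then lin j else 0).

Lemma cc_range j k : 0 <= cc j k <= beta.
Proof. unfold cc. destruct (Nat.ltb (S k) Nn); [destruct (Bool.eqb _ _)|]; lra. Qed.
Lemma cc_tail j k : (Nn <= S k)%nat -> cc j k = 0.
Proof. intros H. unfold cc. destruct (Nat.ltb (S k) Nn) eqn:E; auto. apply Nat.ltb_lt in E; lia. Qed.
Lemma cc_sum k : cc 0 k + cc 1 k = if Nat.ltb (S k) Nn then beta else 0.
Proof. unfold cc. destruct (Nat.ltb (S k) Nn); [|lra]. destruct (Nat.even k); simpl; lra. Qed.

Lemma Hop_Rm w L v : (forall k, (Nn <= S k)%nat -> w k = 0) -> in_Rm (S Nn) (Hop w L v).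
Proof. intros Hw k Hk. unfold Hop, prv. rewrite Hw by lia.
  destruct k; [lia|]. rewrite Hw by lia. destruct (Nat.eqb (S k) Nn) eqn:E. apply Nat.eqb_eq in E; lia. ring. Qed.

Lemma Hop_inner w L v h : (forall k, (Nn <= S k)%nat -> w k = 0) ->
  sumR (S Nn) (fun k => Hop w L v k * h k) =
  sumR Nn (fun k => w k * (v k - v (S k)) * (h k - h (S k))) + L * v Nn * h Nn.
Proof. intros Hw. unfold Hop.
  rewrite (sumR_ext _ _ (fun k => ((w k * (v k - v (S k))) * h k - prv (fun i => w i * (v i - v (S i))) k * h k)
     + (if Nat.eqb k Nn then L * v Nn * h k else 0))).
  2:{ intros k _. destruct (Nat.eqb k Nn); ring. }
  rewrite sumR_plus, sbp. simpl sumR at 1. rewrite Hw by lia. simpl prv. rewrite Hw by lia.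
  assert (E: sumR (S Nn) (fun k => if Nat.eqb k Nn then L * v Nn * h k else 0) = L * v Nn * h Nn).
  { simpl. rewrite Nat.eqb_refl. rewrite (sumR_ext Nn _ (fun _ => 0)). rewrite sumR_zero; ring.
    intros k Hk. destruct (Nat.eqb k Nn) eqn:E; auto. apply Nat.eqb_eq in E; lia. }
  rewrite E.
  ring. Qed.

Lemma gj_Rm j x : in_Rm (S Nn) (gj j x).
Proof. intros k Hk. unfold gj.
  assert (Hw: forall i, (Nn <= S i)%nat -> 2 * cc j i = 0) by (intros; rewrite cc_tail; auto; ring).
  rewrite (Hop_Rm _ Lf x Hw k Hk).
  destruct (Nat.eqb k 0) eqn:E. apply Nat.eqb_eq in E; lia. ring. Qed.

Lemma gj_inner j x h : l2inner (gj j x) h =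
  2 * sumR Nn (fun k => cc j k * (x k - x (S k)) * (h k - h (S k))) + Lf * x Nn * h Nn - lin j * h O.
Proof. rewrite (fin_inner_l (S Nn)) by apply gj_Rm. unfold gj.
  rewrite (sumR_ext _ _ (fun k => Hop (fun i => 2 * cc j i) Lf x k * h k - (if Nat.eqb k 0 then lin j * h k else 0))).
  2:{ intros k _. destruct (Nat.eqb k 0); ring. }
  rewrite sumR_minus, Hop_inner by (intros; rewrite cc_tail; auto; ring).
  rewrite sumR_succ_l. simpl (Nat.eqb 0 0).
  rewrite (sumR_ext Nn (fun k => if Nat.eqb (S k) 0 then lin j * h (S k) else 0) (fun _ => 0)) by auto.
  rewrite sumR_zero.
  rewrite (sumR_ext Nn _ (fun k => 2 * (cc j k * (x k - x (S k)) * (h k - h (S k))))) by (intros; ring).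
  rewrite sumR_scal. ring. Qed.

Lemma fj_expand j x h : fj j (vadd x h) - fj j x - l2inner (gj j x) h = Qf j h.
Proof. rewrite gj_inner. unfold fj, Qf, vadd.
  assert (E: sumR Nn (fun k => cc j k * (x k + h k - (x (S k) + h (S k))) ^ 2) =
    sumR Nn (fun k => cc j k * (x k - x (S k)) ^ 2) + 2 * sumR Nn (fun k => cc j k * (x k - x (S k)) * (h k - h (S k)))
    + sumR Nn (fun k => cc j k * (h k - h (S k)) ^ 2)).
  { rewrite <- sumR_scal, <- !sumR_plus. apply sumR_ext. intros. ring. }
  rewrite E. field. Qed.

Lemma Qf_nonneg j h : 0 <= Qf j h.
Proof. unfold Qf. assert (0 <= sumR Nn (fun k => cc j k * (h k - h (S k)) ^ 2)).
  { apply sumR_nonneg. intros k _. pose proof (cc_range j k). pose proof (pow2_ge_0 (h k - h (S k))). nra. }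
  pose proof (pow2_ge_0 (h Nn)). nra. Qed.

Lemma Qf_bound j h : Qf j h <= (4 * beta + Lf) * sumR (S Nn) (fun k => h k ^ 2).
Proof. unfold Qf.
  assert (H1: sumR Nn (fun k => cc j k * (h k - h (S k)) ^ 2) <=
     sumR Nn (fun k => 2 * beta * h k ^ 2) + sumR Nn (fun k => 2 * beta * h (S k) ^ 2)).
  { rewrite <- sumR_plus. apply sumR_le. intros k _. pose proof (cc_range j k).
    pose proof (pow2_ge_0 (h k - h (S k))). pose proof (pow2_ge_0 (h k + h (S k))).
    assert ((h k - h (S k)) ^ 2 <= 2 * h k ^ 2 + 2 * h (S k) ^ 2) by nra. nra. }
  rewrite !sumR_scal in H1.
  assert (H2: sumR Nn (fun k => h k ^ 2) <= sumR (S Nn) (fun k => h k ^ 2)).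
  { simpl. pose proof (pow2_ge_0 (h Nn)). lra. }
  assert (H3: sumR Nn (fun k => h (S k) ^ 2) <= sumR (S Nn) (fun k => h k ^ 2)).
  { rewrite (sumR_succ_l Nn (fun k => h k ^ 2)). pose proof (pow2_ge_0 (h O)). lra. }
  assert (H4: h Nn ^ 2 <= sumR (S Nn) (fun k => h k ^ 2)).
  { apply (term_le_sumR (S Nn) (fun k => h k ^ 2)). intros; apply pow2_ge_0. lia. }
  assert (0 <= sumR Nn (fun k => h k ^ 2)) by (apply sumR_nonneg; intros; apply pow2_ge_0).
  nra. Qed.

Lemma grad_fj j : is_gradient_l2 (fj j) (gj j).
Proof. intros x Hx. split. apply (fin_l2 (S Nn)), gj_Rm.
  intros e He. set (K := 4 * beta + Lf + 1). assert (HK: 0 < K) by (unfold K; lra).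
  exists (e / K). split. apply Rdiv_lt_0_compat; auto.
  intros h Hh Hn. rewrite fj_expand. rewrite Rabs_pos_eq by apply Qf_nonneg.
  assert (H0: 0 <= l2norm2 h) by (apply Rle_trans with (sumR 0 (fun k => h k ^ 2)); [simpl; lra|apply trunc_le_norm2; auto]).
  assert (H1: l2norm2 h = l2norm h * l2norm h) by (unfold l2norm; rewrite sqrt_sqrt; auto).
  assert (H2: 0 <= l2norm h) by apply sqrt_pos.
  pose proof (Qf_bound j h). pose proof (trunc_le_norm2 (S Nn) h Hh).
  assert (Qf j h <= K * (l2norm h * l2norm h)).
  { eapply Rle_trans; [apply H|]. rewrite <- H1. apply Rle_trans with ((4 * beta + Lf) * l2norm2 h).
    apply Rmult_le_compat_l; [lra|auto]. unfold K; nra. }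
  assert (K * l2norm h <= e). { apply Rlt_le in Hn. apply (Rmult_le_compat_l K) in Hn; [|lra].
    replace (K * (e / K)) with e in Hn by (field; lra). lra. }
  nra. Qed.

Lemma sq_convex c l a b0 : 0 <= c -> 0 <= l <= 1 ->
  c * (l * a + (1 - l) * b0) ^ 2 <= l * (c * a ^ 2) + (1 - l) * (c * b0 ^ 2).
Proof. intros Hc Hl.
  assert (E: l * (c * a ^ 2) + (1 - l) * (c * b0 ^ 2) - c * (l * a + (1 - l) * b0) ^ 2 = c * (l * (1 - l)) * (a - b0) ^ 2) by ring.
  assert (0 <= c * (l * (1 - l)) * (a - b0) ^ 2).
  { apply Rmult_le_pos; [apply Rmult_le_pos; [auto|apply Rmult_le_pos; lra]|apply pow2_ge_0]. }
  lra. Qed.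

Lemma convex_fj j : convex_fun_l2 (fj j).
Proof. intros x y l Hx Hy Hl. unfold fj, Qf, vcomb.
  assert (H1: sumR Nn (fun k => cc j k * (l * x k + (1 - l) * y k - (l * x (S k) + (1 - l) * y (S k))) ^ 2) <=
     l * sumR Nn (fun k => cc j k * (x k - x (S k)) ^ 2) + (1 - l) * sumR Nn (fun k => cc j k * (y k - y (S k)) ^ 2)).
  { rewrite <- !sumR_scal, <- sumR_plus. apply sumR_le. intros k _.
    replace (l * x k + (1 - l) * y k - (l * x (S k) + (1 - l) * y (S k))) with (l * (x k - x (S k)) + (1 - l) * (y k - y (S k))) by ring.
    apply sq_convex; [apply cc_range|auto]. }
  assert (H2: Lf / 2 * (l * x Nn + (1 - l) * y Nn) ^ 2 <= l * (Lf / 2 * x Nn ^ 2) + (1 - l) * (Lf / 2 * y Nn ^ 2)).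
  { apply sq_convex; auto. lra. }
  assert (E: lin j * (l * x 0%nat + (1 - l) * y 0%nat) = l * (lin j * x 0%nat) + (1 - l) * (lin j * y 0%nat)) by ring.
  rewrite E. lra. Qed.

Lemma Hop_sq_bound w W L v : (forall k, 0 <= w k <= W) -> (forall k, (Nn <= S k)%nat -> w k = 0) ->
  sumR (S Nn) (fun k => Hop w L v k ^ 2) <= 16 * W ^ 2 * sumR Nn (fun k => v k ^ 2) + L ^ 2 * v Nn ^ 2.
Proof. intros Hw Hw0. assert (HM': exists M, Nn = S M) by (exists (pred Nn); lia). destruct HM' as [M HM].
  set (A := fun i => w i * (v i - v (S i))).
  assert (HW: 0 <= W) by (destruct (Hw O); lra).
  assert (HNn: Hop w L v Nn = L * v Nn).
  { assert (P0: prv (fun i => w i * (v i - v (S i))) Nn = 0) by (rewrite HM; simpl; rewrite (Hw0 M) by lia; ring).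
    unfold Hop. rewrite P0, Nat.eqb_refl, (Hw0 Nn) by lia. ring. }
  rewrite sumR_S. rewrite HNn.
  assert (Hk: forall k, (k < Nn)%nat -> Hop w L v k ^ 2 <= 2 * A k ^ 2 + 2 * prv A k ^ 2).
  { intros k Hk. assert (E0: Hop w L v k = A k - prv A k).
    { unfold Hop, A. destruct (Nat.eqb k Nn) eqn:E. apply Nat.eqb_eq in E; lia. ring. }
    rewrite E0. pose proof (pow2_ge_0 (A k + prv A k)). nra. }
  assert (S1: sumR Nn (fun k => Hop w L v k ^ 2) <= 2 * sumR Nn (fun k => A k ^ 2) + 2 * sumR Nn (fun k => prv A k ^ 2)).
  { rewrite <- !sumR_scal, <- sumR_plus. apply sumR_le; auto. }
  assert (S2: sumR Nn (fun k => prv A k ^ 2) = sumR M (fun k => A k ^ 2)).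
  { rewrite HM. rewrite <- (sumR_shift M (fun k => A k ^ 2)). apply sumR_ext. intros [|k] _; simpl; ring. }
  assert (S3: sumR Nn (fun k => A k ^ 2) = sumR M (fun k => A k ^ 2)).
  { rewrite HM. simpl. replace (A M) with 0 by (unfold A; rewrite (Hw0 M) by lia; ring). ring. }
  assert (S4: sumR M (fun k => A k ^ 2) <= 2 * W ^ 2 * sumR M (fun k => v k ^ 2) + 2 * W ^ 2 * sumR M (fun k => v (S k) ^ 2)).
  { rewrite <- !sumR_scal, <- sumR_plus. apply sumR_le. intros k _. unfold A.
    destruct (Hw k). pose proof (pow2_ge_0 (v k + v (S k))). pose proof (pow2_ge_0 (v k - v (S k))).
    assert (w k ^ 2 <= W ^ 2) by nra.
    assert ((v k - v (S k)) ^ 2 <= 2 * v k ^ 2 + 2 * v (S k) ^ 2) by nra.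
    replace ((w k * (v k - v (S k))) ^ 2) with (w k ^ 2 * (v k - v (S k)) ^ 2) by ring. nra. }
  assert (S5: sumR M (fun k => v k ^ 2) <= sumR Nn (fun k => v k ^ 2)).
  { rewrite HM. simpl. pose proof (pow2_ge_0 (v M)). lra. }
  assert (S6: sumR M (fun k => v (S k) ^ 2) <= sumR Nn (fun k => v k ^ 2)).
  { rewrite HM. rewrite (sumR_succ_l M (fun k => v k ^ 2)). pose proof (pow2_ge_0 (v O)). lra. }
  assert (0 <= W ^ 2) by apply pow2_ge_0.
  assert (W ^ 2 * sumR M (fun k => v k ^ 2) <= W ^ 2 * sumR Nn (fun k => v k ^ 2)) by (apply Rmult_le_compat_l; auto).
  assert (W ^ 2 * sumR M (fun k => v (S k) ^ 2) <= W ^ 2 * sumR Nn (fun k => v k ^ 2)) by (apply Rmult_le_compat_l; auto).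
  assert (T: 2 * W ^ 2 * sumR M (fun k => v k ^ 2) + 2 * W ^ 2 * sumR M (fun k => v (S k) ^ 2) <= 4 * (W ^ 2 * sumR Nn (fun k => v k ^ 2))) by (rewrite !Rmult_assoc; lra).
  replace ((L * v Nn) ^ 2) with (L ^ 2 * v Nn ^ 2) by ring. rewrite (Rmult_assoc 16). lra. Qed.

Lemma lip_Hop (G : vec -> vec) w W Lam L : (forall k, 0 <= w k <= W) -> (forall k, (Nn <= S k)%nat -> w k = 0) ->
  0 <= L -> 16 * W ^ 2 <= L ^ 2 -> Lam ^ 2 <= L ^ 2 ->
  (forall x y k, G x k - G y k = Hop w Lam (vsub x y) k) -> lipschitz_l2 G L.
Proof. intros Hw Hw0 HL H16 HLam HG x y Hx Hy. unfold l2norm.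
  assert (E: vsub (G x) (G y) = Hop w Lam (vsub x y)).
  { apply functional_extensionality. intros k. apply HG. }
  rewrite E. rewrite (fin_norm2 (S Nn)) by (apply Hop_Rm; auto).
  set (v := vsub x y).
  assert (B1: sumR (S Nn) (fun k => Hop w Lam v k ^ 2) <= L ^ 2 * sumR (S Nn) (fun k => v k ^ 2)).
  { eapply Rle_trans; [apply Hop_sq_bound; eauto|]. rewrite sumR_S.
    assert (0 <= sumR Nn (fun k => v k ^ 2)) by (apply sumR_nonneg; intros; apply pow2_ge_0).
    pose proof (pow2_ge_0 (v Nn)). rewrite Rmult_plus_distr_l.
    apply Rplus_le_compat; apply Rmult_le_compat_r; auto. }
  assert (B2: sumR (S Nn) (fun k => v k ^ 2) <= l2norm2 v) by (apply trunc_le_norm2; apply l2_sub; auto).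
  rewrite <- (sqrt_pow2 L) by auto. rewrite <- sqrt_mult_alt by apply pow2_ge_0.
  apply sqrt_le_1_alt. pose proof (pow2_ge_0 L). nra. Qed.

Lemma lip_gj j : lipschitz_l2 (gj j) (8 * beta + Lf).
Proof. apply (lip_Hop _ (fun i => 2 * cc j i) (2 * beta) Lf).
  - intros k; pose proof (cc_range j k); lra.
  - intros k Hk; rewrite cc_tail; auto; ring.
  - lra.
  - nra.
  - nra.
  - intros x y k. unfold gj, Hop, vsub, prv. destruct (Nat.eqb k Nn); destruct k; simpl; ring. Qed.

Lemma cc_bnd j k : Nat.even (S k) = Nat.eqb j 0 -> cc j k = 0.
Proof. intros H. unfold cc. destruct (Nat.ltb (S k) Nn); auto.
  rewrite Nat.even_succ in H. unfold Nat.odd in H.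
  destruct (Nat.even k), (Nat.eqb j 0); simpl in *; congruence. Qed.

Lemma fj_decomp j n x : (1 <= n)%nat -> Nat.even n = Nat.eqb j 0 ->
  fj j x = fj j (trunc n x) + fj j (vsub x (trunc n x)).
Proof. intros Hn Hb. unfold fj, Qf.
  assert (E1: sumR Nn (fun k => cc j k * (x k - x (S k)) ^ 2) =
    sumR Nn (fun k => cc j k * (trunc n x k - trunc n x (S k)) ^ 2) +
    sumR Nn (fun k => cc j k * (vsub x (trunc n x) k - vsub x (trunc n x) (S k)) ^ 2)).
  { rewrite <- sumR_plus. apply sumR_ext. intros k _. unfold trunc, vsub.
    destruct (Nat.ltb k n) eqn:E1, (Nat.ltb (S k) n) eqn:E2.
    - ring.
    - apply Nat.ltb_lt in E1. apply Nat.ltb_ge in E2. assert (S k = n) by lia. subst n.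
      rewrite cc_bnd by auto. ring.
    - apply Nat.ltb_ge in E1. apply Nat.ltb_lt in E2. lia.
    - ring. }
  assert (E2: x Nn ^ 2 = trunc n x Nn ^ 2 + vsub x (trunc n x) Nn ^ 2).
  { unfold trunc, vsub. destruct (Nat.ltb Nn n); ring. }
  assert (E3: trunc n x 0%nat = x 0%nat /\ vsub x (trunc n x) 0%nat = 0).
  { unfold trunc, vsub. destruct (Nat.ltb 0 n) eqn:E. split; ring. apply Nat.ltb_ge in E; lia. }
  destruct E3 as [E3 E4]. rewrite E1, E2, E3, E4. field. Qed.

Lemma fj_hi_nonneg j z : z 0%nat = 0 -> 0 <= fj j z.
Proof. intros H. unfold fj. rewrite H. pose proof (Qf_nonneg j z). lra. Qed.

Lemma fj_single j k0 a : (1 <= k0)%nat -> fj j (fun k => if Nat.eqb k k0 then a else 0) <= (4 * beta + Lf) * a ^ 2.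
Proof. intros Hk. unfold fj. replace (Nat.eqb 0 k0) with false by (symmetry; apply Nat.eqb_neq; lia).
  pose proof (Qf_bound j (fun k => if Nat.eqb k k0 then a else 0)) as H.
  rewrite (sumR_ext _ _ (fun i => if Nat.eqb i k0 then a ^ 2 else 0)) in H.
  2:{ intros i _. destruct (Nat.eqb i k0); ring. }
  pose proof (sumR_single_le (S Nn) k0 (a ^ 2) (pow2_ge_0 a)).
  assert ((4 * beta + Lf) * sumR (S Nn) (fun i => if Nat.eqb i k0 then a ^ 2 else 0) <= (4 * beta + Lf) * a ^ 2)
    by (apply Rmult_le_compat_l; lra).
  lra. Qed.

Lemma dual_trunc j n xb pb tau p : (1 <= n)%nat -> Nat.even n = Nat.eqb j 0 -> in_Rm n xb -> in_Rm n pb ->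
  0 <= tau -> dual_argmax (fj j) xb pb tau p -> in_Rm n p.
Proof. intros Hn Hb Hxb Hpb Ht [Hp [Hfin Hmax]] k0 Hk0.
  destruct (Req_dec (p k0) 0) as [|Hne]; auto. exfalso.
  set (a := p k0). set (K := 4 * beta + Lf + 1). assert (HK: 0 < K) by (unfold K; lra).
  set (eps := / (2 * K)).
  destruct (fconj (fj j) p) as [F| |] eqn:EF; [| unfold is_finite in Hfin; simpl in Hfin; discriminate ..].
  set (q := trunc n p).
  assert (HC: Rbar_le (fconj (fj j) q) (Finite (F - a ^ 2 / (4 * K)))).
  { apply fconj_le. intros x Hx.
    set (y := fun k => if Nat.eqb k k0 then eps * a else 0).
    set (x' := vadd (trunc n x) y).
    assert (Hy: in_Rm (n + S k0) y).
    { intros k Hk. unfold y. destruct (Nat.eqb k k0) eqn:E; auto. apply Nat.eqb_eq in E; lia. }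
    assert (HT: in_Rm (n + S k0) (trunc n x)) by (apply (in_Rm_mono n); [lia|apply trunc_Rm]).
    assert (Hx': in_Rm (n + S k0) x') by (intros k Hk; unfold x', vadd; rewrite Hy, HT; auto; ring).
    pose proof (ub_fconj (fj j) p x' (fin_l2 _ _ Hx')) as U. rewrite EF in U. simpl in U.
    assert (I1: l2inner x' p = l2inner (trunc n x) p + eps * a * a).
    { unfold x'. rewrite (inner_add (n + S k0)) by auto. f_equal.
      rewrite (fin_inner_l (n + S k0)) by auto.
      rewrite (sumR_ext _ _ (fun i => if Nat.eqb i k0 then eps * a * a else 0)).
      apply sumR_single_eq; lia.
      intros i _. unfold y. destruct (Nat.eqb i k0) eqn:E. apply Nat.eqb_eq in E; subst; unfold a; ring. ring. }
    assert (I2: l2inner (trunc n x) p = l2inner x q).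
    { rewrite (fin_inner_l n) by apply trunc_Rm. rewrite (fin_inner_r n) by apply trunc_Rm.
      apply sumR_ext. intros k Hk. unfold q, trunc. apply Nat.ltb_lt in Hk. rewrite Hk. auto. }
    assert (D1: fj j x' = fj j (trunc n x) + fj j y).
    { rewrite (fj_decomp j n x') by auto. f_equal; f_equal; apply functional_extensionality; intros k;
      unfold x', y, vadd, vsub, trunc; destruct (Nat.ltb k n) eqn:E; destruct (Nat.eqb k k0) eqn:E3; try ring;
      apply Nat.eqb_eq in E3; apply Nat.ltb_lt in E; lia. }
    assert (D2: fj j (trunc n x) <= fj j x).
    { rewrite (fj_decomp j n x) by auto. pose proof (fj_hi_nonneg j (vsub x (trunc n x))).
      assert (vsub x (trunc n x) 0%nat = 0).
      { unfold vsub, trunc. destruct (Nat.ltb 0 n) eqn:E. ring. apply Nat.ltb_ge in E; lia. }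
      specialize (H H0). lra. }
    assert (D3: fj j y <= K * (eps * a) ^ 2).
    { eapply Rle_trans. apply fj_single. lia. apply Rmult_le_compat_r. apply pow2_ge_0. unfold K; lra. }
    assert (E: eps * a * a - K * (eps * a) ^ 2 = a ^ 2 / (4 * K)) by (unfold eps; field; lra).
    lra. }
  assert (Hq: in_Rm n q) by apply trunc_Rm.
  specialize (Hmax q (fin_l2 _ _ Hq)). unfold dual_obj in Hmax. rewrite EF in Hmax.
  assert (A1: l2inner xb q = l2inner xb p).
  { rewrite !(fin_inner_l n xb) by auto. apply sumR_ext. intros k Hk. unfold q, trunc. apply Nat.ltb_lt in Hk. rewrite Hk. auto. }
  assert (A2: l2norm2 (vsub q pb) <= l2norm2 (vsub p pb)).
  { rewrite (fin_norm2 n). 2:{ intros k Hk; unfold vsub; rewrite Hq, Hpb; auto; ring. }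
    eapply Rle_trans; [|apply trunc_le_norm2; apply l2_sub; auto; apply (fin_l2 n); auto].
    right. apply sumR_ext. intros k Hk. unfold vsub, q, trunc. apply Nat.ltb_lt in Hk. rewrite Hk. auto. }
  assert (A3: tau / 2 * l2norm2 (vsub q pb) <= tau / 2 * l2norm2 (vsub p pb)) by (apply Rmult_le_compat_l; lra).
  assert (Ha: 0 < a ^ 2 / (4 * K)).
  { apply Rdiv_lt_0_compat; [|lra]. assert (a <> 0) by auto. pose proof (pow2_ge_0 a). 
    destruct (Rle_lt_or_eq_dec 0 (a ^ 2)) as [|E]; auto. exfalso. apply (pow_nonzero a 2 H). auto. }
  destruct (fconj (fj j) q) as [z| |]; simpl in HC, Hmax; auto.
  lra. Qed.

Variables (alpha delta : R).
Hypothesis Halpha : 0 < alpha.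
Hypothesis Hdelta : 0 <= delta.

Definition Uf (x : vec) : R := alpha / 2 * sumR (S Nn) (fun k => x k ^ 2) + delta / 2 * x (pred Nn) ^ 2.
Variable Rb : R.
Hypothesis HRb : 1 <= Rb.
Definition Dm (x : vec) : Prop := in_Rm (S Nn) x /\ forall k, Rabs (x k) <= Rb.
Definition Kc : R := (alpha / 2 * INR (S Nn) + delta / 2) * Rb ^ 2.
Definition uu (x : vec) : Rbar :=
  if excluded_middle_informative (Dm x) then Finite (Uf x - Kc) else p_infty.

Lemma uu_in x : Dm x -> uu x = Finite (Uf x - Kc).
Proof. intros H. unfold uu. destruct (excluded_middle_informative _); tauto. Qed.
Lemma uu_out x : ~ Dm x -> uu x = p_infty.
Proof. intros H. unfold uu. destruct (excluded_middle_informative _); tauto. Qed.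

Lemma Dm_trunc n x : Dm x -> Dm (trunc n x).
Proof. intros [H1 H2]. split.
  - intros k Hk. unfold trunc. destruct (Nat.ltb k n); auto.
  - intros k. unfold trunc. destruct (Nat.ltb k n); auto. rewrite Rabs_R0; lra. Qed.

Lemma sumR_const M c : sumR M (fun _ => c) = INR M * c.
Proof. induction M. simpl; ring. rewrite sumR_S, IHM, S_INR. ring. Qed.

Lemma Uf_le_Kc x : Dm x -> Uf x <= Kc.
Proof. intros [H1 H2]. unfold Uf, Kc.
  assert (Hs: forall k, x k ^ 2 <= Rb ^ 2).
  { intros k. rewrite <- (pow2_abs (x k)). specialize (H2 k). pose proof (Rabs_pos (x k)). nra. }
  assert (sumR (S Nn) (fun k => x k ^ 2) <= INR (S Nn) * Rb ^ 2).
  { rewrite <- sumR_const. apply sumR_le. intros; auto. }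
  assert (alpha / 2 * sumR (S Nn) (fun k => x k ^ 2) <= alpha / 2 * (INR (S Nn) * Rb ^ 2)) by (apply Rmult_le_compat_l; lra).
  assert (delta / 2 * x (pred Nn) ^ 2 <= delta / 2 * Rb ^ 2) by (apply Rmult_le_compat_l; auto; lra).
  nra. Qed.

Lemma prox_trunc n eta xb x' : in_Rm n xb -> 0 < eta -> prox_argmin (in_Rm (S Nn)) uu eta xb x' -> in_Rm n x'.
Proof. intros Hxb Heta [HX [Hfin Hle]].
  assert (HD: Dm x').
  { destruct (classic (Dm x')) as [|HD]; auto. rewrite uu_out in Hfin by auto. unfold is_finite in Hfin. simpl in Hfin. discriminate. }
  destruct (le_lt_dec (S Nn) n) as [Hn|Hn]. apply (in_Rm_mono (S Nn)); auto.
  intros k0 Hk0. destruct (Req_dec (x' k0) 0) as [|Hne]; auto. exfalso.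
  assert (Hk0': (k0 < S Nn)%nat). { destruct (le_lt_dec (S Nn) k0); auto. exfalso. apply Hne. apply HX; auto. }
  set (y := trunc n x').
  assert (HY: in_Rm (S Nn) y) by (apply (in_Rm_mono n); [lia|apply trunc_Rm]).
  assert (HDy: Dm y) by (apply Dm_trunc; auto).
  specialize (Hle y HY). rewrite !uu_in in Hle by auto. simpl in Hle.
  assert (Hxb': in_Rm (S Nn) xb) by (apply (in_Rm_mono n); [lia|auto]).
  rewrite !(fin_norm2 (S Nn)) in Hle by (intros k Hk; unfold vsub; rewrite ?HX, ?HY, Hxb'; auto; ring).
  assert (S1: sumR (S Nn) (fun k => y k ^ 2) < sumR (S Nn) (fun k => x' k ^ 2)).
  { apply (sumR_lt _ _ _ k0); auto.
    - intros k _. unfold y, trunc. destruct (Nat.ltb k n). lra. pose proof (pow2_ge_0 (x' k)). simpl; lra.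
    - unfold y, trunc. replace (Nat.ltb k0 n) with false by (symmetry; apply Nat.ltb_ge; lia).
      pose proof (pow_nonzero (x' k0) 2 Hne). pose proof (pow2_ge_0 (x' k0)). simpl (0 ^ 2). lra. }
  assert (S2: y (pred Nn) ^ 2 <= x' (pred Nn) ^ 2).
  { unfold y, trunc. destruct (Nat.ltb (pred Nn) n). lra. pose proof (pow2_ge_0 (x' (pred Nn))). simpl; lra. }
  assert (S3: sumR (S Nn) (fun k => vsub y xb k ^ 2) <= sumR (S Nn) (fun k => vsub x' xb k ^ 2)).
  { apply sumR_le. intros k _. unfold vsub, y, trunc. destruct (Nat.ltb k n) eqn:E. lra.
    apply Nat.ltb_ge in E. rewrite Hxb by auto. pose proof (pow2_ge_0 (x' k - 0)). simpl; nra. }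
  unfold Uf in Hle.
  assert (alpha / 2 * sumR (S Nn) (fun k => y k ^ 2) < alpha / 2 * sumR (S Nn) (fun k => x' k ^ 2))
    by (apply Rmult_lt_compat_l; lra).
  assert (delta / 2 * y (pred Nn) ^ 2 <= delta / 2 * x' (pred Nn) ^ 2) by (apply Rmult_le_compat_l; lra).
  assert (eta / 2 * sumR (S Nn) (fun k => vsub y xb k ^ 2) <= eta / 2 * sumR (S Nn) (fun k => vsub x' xb k ^ 2))
    by (apply Rmult_le_compat_l; lra).
  lra. Qed.

Lemma sumR_sq_comb M l x y : sumR M (fun k => (l * x k + (1 - l) * y k) ^ 2) =
  l * sumR M (fun k => x k ^ 2) + (1 - l) * sumR M (fun k => y k ^ 2) - l * (1 - l) * sumR M (fun k => (x k - y k) ^ 2).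
Proof. rewrite <- !sumR_scal, <- sumR_plus, <- sumR_minus. apply sumR_ext. intros; ring. Qed.

Lemma Dm_comb x y l : Dm x -> Dm y -> 0 <= l <= 1 -> Dm (vcomb l x y).
Proof. intros [Hx1 Hx2] [Hy1 Hy2] Hl. split.
  - intros k Hk; unfold vcomb; rewrite Hx1, Hy1; auto; ring.
  - intros k. unfold vcomb. eapply Rle_trans; [apply Rabs_triang|].
    rewrite !Rabs_mult, (Rabs_pos_eq l), (Rabs_pos_eq (1 - l)) by lra.
    specialize (Hx2 k). specialize (Hy2 k). nra. Qed.

Lemma uu_strong a : a <= alpha -> strongly_convex_l2 uu a.
Proof. intros Ha x y l Hx Hy Hl.
  destruct (classic (Dm x)) as [HX|HX]; [destruct (classic (Dm y)) as [HY|HY]|].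
  - assert (HC: Dm (vcomb l x y)) by (apply Dm_comb; auto; lra).
    rewrite !uu_in by auto. simpl.
    rewrite (fin_norm2 (S Nn)) by (destruct HX, HY; intros k Hk; unfold vsub; rewrite H, H1; auto; ring).
    unfold Uf, vcomb, vsub. rewrite sumR_sq_comb.
    assert (0 <= sumR (S Nn) (fun k => (x k - y k) ^ 2)) by (apply sumR_nonneg; intros; apply pow2_ge_0).
    assert (0 <= l * (1 - l)) by (apply Rmult_le_pos; lra).
    assert (E: (l * x (pred Nn) + (1 - l) * y (pred Nn)) ^ 2 = l * x (pred Nn) ^ 2 + (1 - l) * y (pred Nn) ^ 2
       - l * (1 - l) * (x (pred Nn) - y (pred Nn)) ^ 2) by ring.
    rewrite E.
    assert (0 <= l * (1 - l) * (x (pred Nn) - y (pred Nn)) ^ 2) by (apply Rmult_le_pos; auto; apply pow2_ge_0).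
    assert (0 <= delta / 2 * (l * (1 - l) * (x (pred Nn) - y (pred Nn)) ^ 2)) by (apply Rmult_le_pos; lra).
    assert ((alpha - a) / 2 * (l * (1 - l) * sumR (S Nn) (fun k => (x k - y k) ^ 2)) >= 0).
    { apply Rle_ge, Rmult_le_pos. lra. apply Rmult_le_pos; auto. }
    match goal with |- ?A <= ?B => assert (B - A = (alpha - a) / 2 * (l * (1 - l) * sumR (S Nn) (fun k => (x k - y k) ^ 2))
       + delta / 2 * (l * (1 - l) * (x (pred Nn) - y (pred Nn)) ^ 2)) by field end.
    lra.
  - rewrite (uu_out y) by auto. rewrite (Rbar_mult_pinf (1 - l)) by lra. rewrite (uu_in x) by auto.
    destruct (uu (vcomb l x y)); simpl; auto.
  - rewrite (uu_out x) by auto. rewrite (Rbar_mult_pinf l) by lra.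
    destruct (classic (Dm y)) as [HY|HY].
    + rewrite (uu_in y) by auto. destruct (uu (vcomb l x y)); simpl; auto.
    + rewrite (uu_out y) by auto. rewrite (Rbar_mult_pinf (1 - l)) by lra. destruct (uu (vcomb l x y)); simpl; auto.
Qed.

Lemma uu_modulus : strong_convexity_modulus uu alpha.
Proof. split. apply uu_strong; lra.
  intros a' Ha' H. set (e := fun k : nat => if Nat.eqb k Nn then 1 else 0).
  assert (He: in_Rm (S Nn) e) by (intros k Hk; unfold e; destruct (Nat.eqb k Nn) eqn:E; auto; apply Nat.eqb_eq in E; lia).
  assert (HDe: Dm e). { split; auto. intros k; unfold e; destruct (Nat.eqb k Nn); rewrite ?Rabs_R1, ?Rabs_R0; lra. }
  assert (Hz: in_Rm (S Nn) vzero) by (intros k Hk; reflexivity).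
  assert (HDz: Dm vzero). { split; auto. intros k; unfold vzero; rewrite Rabs_R0; lra. }
  specialize (H e vzero (/2) (fin_l2 _ _ He) (fin_l2 _ _ Hz) ltac:(lra)).
  assert (Hc: Dm (vcomb (/2) e vzero)) by (apply Dm_comb; auto; lra).
  rewrite !uu_in in H by auto. simpl in H.
  rewrite (fin_norm2 (S Nn)) in H by (intros k Hk; unfold vsub, vzero; rewrite He; auto; ring).
  assert (Hs: forall (F : nat -> R) c, (forall k, F k = if Nat.eqb k Nn then c else 0) -> sumR (S Nn) F = c).
  { intros F c HF. rewrite (sumR_ext _ _ (fun k => if Nat.eqb k Nn then c else 0)). apply sumR_single_eq; lia. intros; auto. }
  assert (P1: e (pred Nn) = 0) by (unfold e; replace (Nat.eqb (pred Nn) Nn) with false; auto; symmetry; apply Nat.eqb_neq; lia).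
  unfold Uf in H.
  rewrite (Hs _ (/4)) in H. 2:{ intros k; unfold vcomb, vzero, e; destruct (Nat.eqb k Nn); field. }
  rewrite (Hs _ 1) in H. 2:{ intros k; unfold e; destruct (Nat.eqb k Nn); field. }
  rewrite (Hs _ 0) in H. 2:{ intros k; unfold vzero; destruct (Nat.eqb k Nn); field. }
  rewrite (Hs _ 1) in H. 2:{ intros k; unfold vsub, vzero, e; destruct (Nat.eqb k Nn); field. }
  unfold vcomb, vzero in H. rewrite P1 in H. lra.
Qed.

Lemma Xs_closed : l2_set_closed (in_Rm (S Nn)).
Proof. intros xs x Hxs Hx Hc k Hk.
  assert (H1: is_lim_seq (fun n => xs n k) (x k)).
  { apply coord_conv; auto. intros n. apply l2_sub; auto. apply (fin_l2 (S Nn)); auto. }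
  assert (H2: is_lim_seq (fun n => xs n k) 0).
  { apply (is_lim_seq_ext (fun _ => 0)). intros n; rewrite Hxs; auto. apply is_lim_seq_const. }
  apply is_lim_seq_unique in H1. apply is_lim_seq_unique in H2. rewrite H1 in H2. injection H2; auto. Qed.

Lemma Xs_convex : l2_set_convex (in_Rm (S Nn)).
Proof. intros x y l Hx Hy Hl k Hk. unfold vcomb. rewrite Hx, Hy; auto. ring. Qed.

Lemma uu_closed : closed_l2 uu.
Proof. intros xs x rs r Hxs Hx Hc Hr Hle.
  assert (HX: forall n, Dm (xs n)).
  { intros n. destruct (classic (Dm (xs n))) as [|Hn]; auto. specialize (Hle n). rewrite uu_out in Hle; auto. simpl in Hle. tauto. }
  assert (Hco: forall k, is_lim_seq (fun n => xs n k) (x k)).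
  { intros k. apply coord_conv; auto. intros n. apply l2_sub; auto. }
  assert (Hx': Dm x).
  { split. apply (Xs_closed xs x); auto. intros n; apply HX.
    intros k. apply Rabs_le. split.
    - assert (Rbar_le (-Rb) (x k)); [|simpl in *; auto].
      apply (is_lim_seq_le (fun _ => -Rb) (fun n => xs n k)); auto. intros n. destruct (HX n) as [_ H]. specialize (H k).
      apply Rabs_le_between in H. lra. apply is_lim_seq_const.
    - assert (Rbar_le (x k) Rb); [|simpl in *; auto].
      apply (is_lim_seq_le (fun n => xs n k) (fun _ => Rb)); auto. intros n. destruct (HX n) as [_ H]. specialize (H k).
      apply Rabs_le_between in H. lra. apply is_lim_seq_const. }
  rewrite uu_in by auto.
  assert (Hu: forall n, Uf (xs n) - Kc <= rs n). { intros n. specialize (Hle n). rewrite uu_in in Hle; auto. }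
  assert (HL: is_lim_seq (fun n => Uf (xs n) - Kc) (Uf x - Kc)).
  { unfold Uf. apply is_lim_seq_minus'; [|apply is_lim_seq_const]. apply is_lim_seq_plus'.
    - apply is_lim_seq_mult'. apply is_lim_seq_const. apply (sumR_lim (S Nn) (fun n k => xs n k ^ 2) (fun k => x k ^ 2)).
      intros k _. apply lim_sq; auto.
    - apply is_lim_seq_mult'. apply is_lim_seq_const. apply lim_sq; auto. }
  pose proof (is_lim_seq_le _ _ _ _ Hu HL Hr) as HH.
  pose proof (Uf_le_Kc x Hx').
  destruct r as [r| |]; simpl in *; lra. Qed.

Lemma uu_proper : proper_l2 uu.
Proof. split.
  - intros x _. unfold uu. destruct (excluded_middle_informative _); discriminate.
  - exists vzero. assert (H: in_Rm (S Nn) vzero) by (intros k _; reflexivity).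
    assert (HD: Dm vzero). { split; auto. intros k; unfold vzero; rewrite Rabs_R0; lra. }
    split. apply (fin_l2 (S Nn)); auto. rewrite uu_in by auto. reflexivity. Qed.

Lemma Uf_expand x h : Uf (vadd x h) = Uf x + alpha * sumR (S Nn) (fun k => x k * h k) + delta * x (pred Nn) * h (pred Nn) + Uf h.
Proof. unfold Uf, vadd.
  assert (E: sumR (S Nn) (fun k => (x k + h k) ^ 2) = sumR (S Nn) (fun k => x k ^ 2) + 2 * sumR (S Nn) (fun k => x k * h k) + sumR (S Nn) (fun k => h k ^ 2)).
  { rewrite <- sumR_scal, <- !sumR_plus. apply sumR_ext. intros; ring. }
  rewrite E. field. Qed.

Variables (C q : R).
Hypothesis Hq : alpha * q = beta * (1 - q) ^ 2.
Hypothesis Hdq : delta = beta * (1 - q).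
Hypothesis Hb : b = C * (beta * (1 - q) + alpha).

Definition xstar : vec := fun k => if Nat.ltb k Nn then C * q ^ k else 0.
Definition p0 : vec := fun i => if Nat.ltb i 2 then / 2 else 0.
Definition Phi (x : vec) : R := sumR 2 (fun i => p0 i * fj i x) + Uf x.

Lemma chain_id M h : beta * (1 - q) * sumR M (fun k => q ^ k * (h k - h (S k))) + alpha * sumR (S M) (fun k => q ^ k * h k) =
  (beta * (1 - q) + alpha) * h O - beta * (1 - q) * q ^ M * h M.
Proof. induction M.
  - simpl. ring.
  - rewrite (sumR_S M), (sumR_S (S M)). 
    replace (beta * (1 - q) * (sumR M (fun k => q ^ k * (h k - h (S k))) + q ^ M * (h M - h (S M))) +
      alpha * (sumR (S M) (fun k => q ^ k * h k) + q ^ S M * h (S M)))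
    with ((beta * (1 - q) * sumR M (fun k => q ^ k * (h k - h (S k))) + alpha * sumR (S M) (fun k => q ^ k * h k))
      + beta * (1 - q) * q ^ M * (h M - h (S M)) + (alpha * q) * q ^ M * h (S M)) by (simpl; ring).
    rewrite IHM, Hq. simpl. ring. Qed.

Lemma Xs_xstar : in_Rm (S Nn) xstar.
Proof. intros k Hk. unfold xstar. destruct (Nat.ltb k Nn) eqn:E; auto. apply Nat.ltb_lt in E; lia. Qed.

Lemma Phi_opt y : Phi xstar <= Phi y.
Proof.
  set (h := vsub y xstar).
  assert (Ey: y = vadd xstar h) by (apply functional_extensionality; intros k; unfold h, vadd, vsub; ring).
  rewrite Ey. unfold Phi. simpl sumR.
  rewrite Uf_expand.
  pose proof (fj_expand 0 xstar h) as F0. pose proof (fj_expand 1 xstar h) as F1.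
  rewrite gj_inner in F0, F1.
  unfold p0. simpl (Nat.ltb 0 2). simpl (Nat.ltb 1 2).
  assert (Q: 0 <= Qf 0 h /\ 0 <= Qf 1 h) by (split; apply Qf_nonneg).
  assert (QU: 0 <= Uf h).
  { unfold Uf. assert (0 <= sumR (S Nn) (fun k => h k ^ 2)) by (apply sumR_nonneg; intros; apply pow2_ge_0).
    pose proof (pow2_ge_0 (h (pred Nn))). assert (0 <= alpha / 2 * sumR (S Nn) (fun k => h k ^ 2)) by (apply Rmult_le_pos; lra).
    assert (0 <= delta / 2 * h (pred Nn) ^ 2) by (apply Rmult_le_pos; lra). lra. }
  (* the linear part vanishes *)
  assert (LIN: sumR Nn (fun k => cc 0 k * (xstar k - xstar (S k)) * (h k - h (S k))) +
     sumR Nn (fun k => cc 1 k * (xstar k - xstar (S k)) * (h k - h (S k))) + Lf * xstar Nn * h Nn - b * h O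
     + alpha * sumR (S Nn) (fun k => xstar k * h k) + delta * xstar (pred Nn) * h (pred Nn) = 0).
  { assert (HM': exists M, Nn = S M) by (exists (pred Nn); lia). destruct HM' as [M HM].
    rewrite <- sumR_plus.
    assert (X1: sumR Nn (fun k => cc 0 k * (xstar k - xstar (S k)) * (h k - h (S k)) + cc 1 k * (xstar k - xstar (S k)) * (h k - h (S k)))
      = C * (beta * (1 - q) * sumR M (fun k => q ^ k * (h k - h (S k))))).
    { rewrite HM, sumR_S. rewrite <- sumR_scal, <- sumR_scal. 
      replace (cc 0 M) with 0 by (symmetry; apply cc_tail; lia). replace (cc 1 M) with 0 by (symmetry; apply cc_tail; lia).
      match goal with |- _ + ?t = _ => replace t with 0 by ring end. rewrite Rplus_0_r.
      apply sumR_ext. intros k Hk.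
      replace (cc 0 k * (xstar k - xstar (S k)) * (h k - h (S k)) + cc 1 k * (xstar k - xstar (S k)) * (h k - h (S k)))
        with ((cc 0 k + cc 1 k) * (xstar k - xstar (S k)) * (h k - h (S k))) by ring.
      rewrite cc_sum. unfold xstar. rewrite HM.
      replace (Nat.ltb (S k) (S M)) with true by (symmetry; apply Nat.ltb_lt; lia).
      replace (Nat.ltb k (S M)) with true by (symmetry; apply Nat.ltb_lt; lia).
      simpl. ring. }
    assert (X2: xstar Nn = 0) by (unfold xstar; rewrite Nat.ltb_irrefl; auto).
    assert (X3: sumR (S Nn) (fun k => xstar k * h k) = C * sumR (S M) (fun k => q ^ k * h k)).
    { rewrite sumR_S, X2, HM. rewrite <- sumR_scal. rewrite Rmult_0_l, Rplus_0_r. apply sumR_ext. intros k Hk.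
      unfold xstar. replace (Nat.ltb k Nn) with true by (symmetry; apply Nat.ltb_lt; lia). ring. }
    assert (X4: xstar (pred Nn) = C * q ^ M).
    { unfold xstar. rewrite HM. simpl pred. replace (Nat.ltb M (S M)) with true by (symmetry; apply Nat.ltb_lt; lia). auto. }
    rewrite X1, X2, X3, X4. rewrite HM. simpl pred.
    pose proof (chain_id M h) as CI.
    rewrite Hb, Hdq.
    replace (C * (beta * (1 - q) * sumR M (fun k => q ^ k * (h k - h (S k)))) + Lf * 0 * h (S M) -
      C * (beta * (1 - q) + alpha) * h 0%nat + alpha * (C * sumR (S M) (fun k => q ^ k * h k)) +
      beta * (1 - q) * (C * q ^ M) * h M)
    with (C * (beta * (1 - q) * sumR M (fun k => q ^ k * (h k - h (S k))) + alpha * sumR (S M) (fun k => q ^ k * h k))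
      - C * (beta * (1 - q) + alpha) * h 0%nat + beta * (1 - q) * (C * q ^ M) * h M) by ring.
    rewrite CI. ring. }
  unfold lin in F0, F1. simpl (Nat.eqb 0 0) in F0. simpl (Nat.eqb 1 0) in F1.
  assert (E0: fj 0 (vadd xstar h) = fj 0 xstar + (2 * sumR Nn (fun k => cc 0 k * (xstar k - xstar (S k)) * (h k - h (S k))) + Lf * xstar Nn * h Nn - 2 * b * h 0%nat) + Qf 0 h) by lra.
  assert (E1: fj 1 (vadd xstar h) = fj 1 xstar + (2 * sumR Nn (fun k => cc 1 k * (xstar k - xstar (S k)) * (h k - h (S k))) + Lf * xstar Nn * h Nn - 0 * h 0%nat) + Qf 1 h) by lra.
  rewrite E0, E1. replace (if Nat.ltb 0 2 then /2 else 0) with (/2) by reflexivity. replace (if Nat.ltb 1 2 then /2 else 0) with (/2) by reflexivity. lra. Qed.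

Definition eN : vec := fun k => if Nat.eqb k Nn then 1 else 0.

Lemma Hop_eN w L k : (forall k, (Nn <= S k)%nat -> w k = 0) -> Hop w L eN k = if Nat.eqb k Nn then L else 0.
Proof. intros Hw. unfold Hop, prv, eN.
  assert (T1: w k * ((if Nat.eqb k Nn then 1 else 0) - (if Nat.eqb (S k) Nn then 1 else 0)) = 0).
  { destruct (le_lt_dec Nn (S k)). rewrite Hw by auto. ring.
    replace (Nat.eqb k Nn) with false by (symmetry; apply Nat.eqb_neq; lia).
    replace (Nat.eqb (S k) Nn) with false by (symmetry; apply Nat.eqb_neq; lia). ring. }
  rewrite T1.
  destruct k as [|k'].
  - rewrite Nat.eqb_refl. destruct (Nat.eqb 0 Nn); ring.
  - assert (T2: w k' * ((if Nat.eqb k' Nn then 1 else 0) - (if Nat.eqb (S k') Nn then 1 else 0)) = 0).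
    { destruct (le_lt_dec Nn (S k')). rewrite Hw by auto. ring.
      replace (Nat.eqb k' Nn) with false by (symmetry; apply Nat.eqb_neq; lia).
      replace (Nat.eqb (S k') Nn) with false by (symmetry; apply Nat.eqb_neq; lia). ring. }
    rewrite T2. rewrite Nat.eqb_refl. destruct (Nat.eqb (S k') Nn); ring. Qed.

Lemma agg_Hop x y k : agg_grad 2 gj p0 x k - agg_grad 2 gj p0 y k = Hop (fun i => cc 0 i + cc 1 i) Lf (vsub x y) k.
Proof. unfold agg_grad, gj, Hop, vsub, prv, p0. simpl sumR.
  replace (Nat.ltb 0 2) with true by reflexivity. replace (Nat.ltb 1 2) with true by reflexivity.
  destruct (Nat.eqb k Nn); destruct (Nat.eqb k 0); destruct k; field. Qed.

Lemma agg_lip : 16 * beta ^ 2 <= Lf ^ 2 -> lipschitz_l2 (agg_grad 2 gj p0) Lf.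
Proof. intros H. apply (lip_Hop _ (fun i => cc 0 i + cc 1 i) beta Lf).
  - intros k. rewrite cc_sum. destruct (Nat.ltb (S k) Nn); lra.
  - intros k Hk. rewrite !cc_tail; auto; ring.
  - auto.
  - auto.
  - lra.
  - apply agg_Hop. Qed.

Lemma agg_sharp L' : L' < Lf -> ~ lipschitz_l2 (agg_grad 2 gj p0) L'.
Proof. intros HL H.
  assert (He: in_Rm (S Nn) eN) by (intros k Hk; unfold eN; destruct (Nat.eqb k Nn) eqn:E; auto; apply Nat.eqb_eq in E; lia).
  assert (Hz: in_Rm (S Nn) vzero) by (intros k Hk; reflexivity).
  specialize (H eN vzero (fin_l2 _ _ He) (fin_l2 _ _ Hz)).
  assert (E1: vsub (agg_grad 2 gj p0 eN) (agg_grad 2 gj p0 vzero) = fun k => if Nat.eqb k Nn then Lf else 0).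
  { apply functional_extensionality. intros k. unfold vsub at 1. rewrite agg_Hop.
    replace (vsub eN vzero) with eN by (apply functional_extensionality; intros; unfold vsub, vzero; ring).
    apply Hop_eN. intros i Hi; rewrite !cc_tail; auto; ring. }
  assert (E2: vsub eN vzero = eN) by (apply functional_extensionality; intros; unfold vsub, vzero; ring).
  rewrite E1, E2 in H. unfold l2norm in H.
  assert (Hs: forall c, sumR (S Nn) (fun k => (if Nat.eqb k Nn then c else 0) ^ 2) = c ^ 2).
  { intros c. rewrite (sumR_ext _ _ (fun k => if Nat.eqb k Nn then c ^ 2 else 0)). apply sumR_single_eq; lia.
    intros k _; destruct (Nat.eqb k Nn); ring. }
  rewrite (fin_norm2 (S Nn)) in H. 2:{ intros k Hk; destruct (Nat.eqb k Nn) eqn:E; auto; apply Nat.eqb_eq in E; lia. }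
  rewrite (fin_norm2 (S Nn)) in H by auto. unfold eN in H. rewrite !Hs in H.
  rewrite sqrt_pow2 in H by auto. replace (1 ^ 2) with 1 in H by ring. rewrite sqrt_1 in H. lra. Qed.

Definition Pset (p : vec) : Prop := p = p0.
Definition rho0 (p : vec) : Rbar := Finite 0.

Lemma objective_eq x : objective 2 Pset rho0 uu fj x = Rbar_plus (Finite (sumR 2 (fun i => p0 i * fj i x))) (uu x).
Proof. unfold objective. f_equal. apply Lub_single. intros r; split.
  - intros [p [r' [Hp [Hr ->]]]]. unfold Pset in Hp. subst p. unfold rho0 in Hr. injection Hr; intros <-. ring.
  - intros ->. exists p0, 0. split; [reflexivity|split; [reflexivity|ring]]. Qed.

Lemma Dm_xstar : 0 <= q <= 1 -> 0 <= C <= Rb -> Dm xstar.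
Proof. intros Hq1 HC. split. apply Xs_xstar. intros k. unfold xstar. destruct (Nat.ltb k Nn).
  - rewrite Rabs_mult, Rabs_pos_eq by lra. rewrite Rabs_pos_eq by (apply pow_le; lra).
    assert (q ^ k <= 1) by (apply pow_le_one; lra). assert (0 <= q ^ k) by (apply pow_le; lra). nra.
  - rewrite Rabs_R0; lra. Qed.

Lemma xstar_opt : 0 <= q <= 1 -> 0 <= C <= Rb -> optimal_solution 2 Pset rho0 (in_Rm (S Nn)) uu fj xstar.
Proof. intros Hq1 HC. pose proof (Dm_xstar Hq1 HC) as HD. split; [apply Xs_xstar|split].
  - rewrite objective_eq, uu_in by auto. reflexivity.
  - intros y Hy. rewrite !objective_eq. rewrite (uu_in xstar) by auto.
    destruct (classic (Dm y)) as [HDy|HDy].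
    + rewrite (uu_in y HDy). simpl. pose proof (Phi_opt y) as H. unfold Phi in H. change (sumR 2 ?f) with (0 + f 0%nat + f 1%nat) in H. lra.
    + rewrite (uu_out y HDy). simpl. auto. Qed.

End Chain.


Definition nj (j t : nat) : nat := if Bool.eqb (Nat.even (S t)) (Nat.eqb j 0) then S t else S (S t).

Lemma nj_bounds j t : (S t <= nj j t <= S (S t))%nat.
Proof. unfold nj. destruct (Bool.eqb _ _); lia. Qed.
Lemma nj_mono j t : (nj j t <= nj j (S t))%nat.
Proof. pose proof (nj_bounds j t). pose proof (nj_bounds j (S t)). lia. Qed.
Lemma nj_par j t : Nat.even (nj j t) = Nat.eqb j 0.
Proof. unfold nj. destruct (Bool.eqb (Nat.even (S t)) (Nat.eqb j 0)) eqn:E.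
  - apply Bool.eqb_prop in E. auto.
  - rewrite Nat.even_succ_succ. rewrite Nat.even_succ in E. unfold Nat.odd in E.
    destruct (Nat.even t), (Nat.eqb j 0); simpl in *; congruence. Qed.

Section Inv.
Variables (Nn : nat) (beta Lf b alpha delta Rb : R).
Hypothesis HN : (1 <= Nn)%nat.
Hypothesis Hbeta : 0 <= beta.
Hypothesis HLf : 0 <= Lf.
Hypothesis Halpha : 0 < alpha.
Hypothesis Hdelta : 0 <= delta.
Hypothesis HRb : 1 <= Rb.

Definition Inv (t : nat) (s : dpm_state) : Prop :=
  (forall y, srv s y -> in_Rm (S t) y) /\
  (forall j y, (j < 2)%nat -> pmem s j y -> in_Rm (nj j t) y) /\
  (forall j y, (j < 2)%nat -> dmem s j y -> in_Rm (nj j t) y).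

Lemma reach_inv t s : reach 2 (in_Rm (S Nn)) (uu Nn alpha delta Rb) (fj Nn beta Lf b) t s -> Inv t s.
Proof. induction 1 as [| t s s' R IH Hw | t s s' R IH Hs | t s s' R IH Hc].
  - unfold init_state, Inv; simpl. repeat split; intros; subst; intros k _; reflexivity.
  - destruct IH as [I1 [I2 I3]].
    destruct Hw as [i [xb [pb [tau [p' [Hi [Hxb [Hpb [Ht [Hd ->]]]]]]]]]].
    assert (Xb: in_Rm (nj i t) xb) by (apply (span_Rm _ (pmem s i)); auto).
    assert (Pb: in_Rm (nj i t) pb) by (apply (span_Rm _ (dmem s i)); auto).
    assert (Pp: in_Rm (nj i t) p').
    { eapply (dual_trunc Nn beta Lf b HN Hbeta HLf i (nj i t) xb pb tau p'); eauto.
      pose proof (nj_bounds i t); lia. apply nj_par. }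
    unfold Inv; simpl. split; [auto|split].
    + intros j y Hj [H|[-> [->| ->]]]; auto.
    + intros j y Hj [H|[-> [->| ->]]]; auto.
  - destruct IH as [I1 [I2 I3]].
    destruct Hs as [xb [eta [x' [Hxb [Heta [Hp ->]]]]]].
    assert (Xb: in_Rm (S t) xb) by (apply (span_Rm _ (srv s)); auto).
    assert (Xp: in_Rm (S t) x') by (eapply (prox_trunc Nn HN alpha delta Halpha Hdelta Rb HRb (S t) eta xb x'); eauto).
    unfold Inv; simpl. split; [|split; auto].
    intros y [H| ->]; auto.
  - destruct IH as [I1 [I2 I3]].
    destruct Hc as [v [w [Hv [Hw ->]]]].
    assert (V: forall j, (j < 2)%nat -> in_Rm (S (S t)) (v j)).
    { intros j Hj. apply (in_Rm_mono (nj j t)). apply nj_bounds. apply (span_Rm _ (pmem s j)); auto. }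
    assert (S': forall y, (srv s y \/ exists j, (j < 2)%nat /\ y = v j) -> in_Rm (S (S t)) y).
    { intros y [H|[j [Hj ->]]]; auto. apply (in_Rm_mono (S t)); auto. }
    unfold Inv; simpl. split; [auto|split].
    + intros j y Hj [H|[_ ->]].
      * apply (in_Rm_mono (nj j t)). apply nj_mono. auto.
      * apply (in_Rm_mono (S (S t))). apply nj_bounds. apply (span_Rm _ _ _ S'). auto.
    + intros j y Hj H. apply (in_Rm_mono (nj j t)). apply nj_mono. auto. Qed.

Lemma output_supp t x : dpm_output 2 (in_Rm (S Nn)) (uu Nn alpha delta Rb) (fj Nn beta Lf b) t x -> in_Rm (S (S t)) x.
Proof. intros [s [R Hx]]. destruct (reach_inv t s R) as [I1 [I2 _]].
  refine (span_Rm _ _ _ _ Hx). intros y [H|[i [Hi H]]].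
  - apply (in_Rm_mono (S t)); auto.
  - apply (in_Rm_mono (nj i t)). apply nj_bounds. auto. Qed.

End Inv.


Lemma ln_le_sub1 y : 0 < y -> ln y <= y - 1.
Proof. intros H. pose proof (exp_ineq1_le (ln y)). rewrite exp_ln in H0 by auto. lra. Qed.

Theorem theorem5p3 :
  exists c : R, 0 < c /\
  forall Lf alpha eps : R, 0 < alpha -> 8 * alpha < Lf -> 0 < eps ->
  exists (m : nat) (P : vec -> Prop) (rho : vec -> Rbar) (X : vec -> Prop)
         (u : vec -> Rbar) (f : nat -> vec -> R) (g : nat -> vec -> vec) (xstar : vec),
    smooth_problem m P rho X u f g /\
    aggregate_smoothness m P g Lf /\
    strong_convexity_modulus u alpha /\
    optimal_solution m P rho X u f xstar /\
    forall (t : nat) (x : vec), dpm_output m X u f t x ->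
      l2norm2 (vsub x xstar) <= eps ->
      c * sqrt (Lf / alpha) * ln (1 / eps) <= INR t.
Proof.
  exists (/ 50). split; [lra|]. intros Lf alpha eps Ha HL He.
  assert (HLa: 8 < Lf / alpha) by (apply (Rmult_lt_reg_r alpha); [auto|]; unfold Rdiv; rewrite Rmult_assoc, Rinv_l; lra).
  set (s := sqrt (Lf / alpha)).
  assert (Hs2: s * s = Lf / alpha) by (unfold s; apply sqrt_sqrt; lra).
  assert (Hs0: 0 <= s) by apply sqrt_pos.
  assert (Hs: 25 / 9 <= s) by nra.
  assert (HLs: alpha * (s * s) = Lf) by (rewrite Hs2; field; lra).
  set (q := 1 - 5 / (2 * s)).
  assert (Hq1: 1 / 10 <= q).
  { unfold q. assert (5 / (2 * s) <= 9 / 10). { apply (Rmult_le_reg_r (2 * s)); [lra|]. field_simplify; lra. } lra. }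
  assert (Hq2: q < 1) by (unfold q; assert (0 < 5 / (2 * s)) by (apply Rdiv_lt_0_compat; lra); lra).
  set (beta := alpha * q / (1 - q) ^ 2).
  assert (Hbeta: beta = 4 * q * Lf / 25).
  { unfold beta. rewrite <- HLs. unfold q. field. lra. }
  assert (Hbeta0: 0 <= beta) by (rewrite Hbeta; nra).
  set (delta := beta * (1 - q)).
  assert (Hdelta: 0 <= delta) by (unfold delta; nra).
  set (C := / q ^ 2).
  assert (HC1: 1 <= C).
  { unfold C. rewrite <- Rinv_1. apply Rinv_le_contravar. nra. nra. }
  set (b := C * (beta * (1 - q) + alpha)).
  destruct (INR_unbounded (s * Rabs (ln (1 / eps)))) as [n0 Hn0].
  set (Nn := S (S n0)).
  assert (HN: (1 <= Nn)%nat) by (unfold Nn; lia).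
  assert (HLf0: 0 <= Lf) by lra.
  exists 2%nat, Pset, rho0, (in_Rm (S Nn)), (uu Nn alpha delta C), (fj Nn beta Lf b), (gj Nn beta Lf b), (xstar Nn C q).
  split; [|split; [|split; [|split]]].
  -
    assert (S1: forall p, Pset p -> in_simplex 2 p).
    { intros p Hp. unfold Pset in Hp. subst p. split; [|split].
      - intros k Hk. unfold p0. replace (Nat.ltb k 2) with false by (symmetry; apply Nat.ltb_ge; lia). auto.
      - intros i Hi. unfold p0. destruct (Nat.ltb i 2); lra.
      - unfold p0. simpl. lra. }
    assert (S2: Rm_set_closed 2 Pset).
    { intros ps p Hps Hp Hlim. unfold Pset. apply functional_extensionality. intros i.
      specialize (Hlim i). assert (H2: is_lim_seq (fun n => ps n i) (p0 i)).
      { apply (is_lim_seq_ext (fun _ => p0 i)). intros n. rewrite (Hps n). auto. apply is_lim_seq_const. }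
      apply is_lim_seq_unique in Hlim. apply is_lim_seq_unique in H2. rewrite Hlim in H2. injection H2; auto. }
    assert (S3: Rm_set_convex 2 Pset).
    { intros p q0 l Hp Hq Hl. unfold Pset in *. rewrite Hp, Hq. apply functional_extensionality. intros k. unfold vcomb. ring. }
    assert (S4: proper_Rm 2 rho0).
    { split. intros p _. unfold rho0. discriminate.
      exists p0. split. intros k Hk. unfold p0. replace (Nat.ltb k 2) with false by (symmetry; apply Nat.ltb_ge; lia). auto.
      reflexivity. }
    assert (S5: closed_Rm 2 rho0).
    { intros ps p rs r _ _ _ Hr Hle. unfold rho0 in *. simpl in Hle.
      assert (Rbar_le 0 r) by (apply (is_lim_seq_le (fun _ => 0) rs); auto; apply is_lim_seq_const).
      destruct r; simpl in *; lra. }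
    assert (S6: convex_Rm 2 rho0).
    { intros p q0 l _ _ Hl. unfold rho0. simpl. lra. }
    assert (S7: forall x, in_Rm (S Nn) x -> is_l2 x) by (intros x Hx; apply (fin_l2 (S Nn)); auto).
    assert (S8: convex_l2 (uu Nn alpha delta C)) by (apply uu_strong; auto; lra).
    assert (S9: forall i, (i < 2)%nat -> convex_fun_l2 (fj Nn beta Lf b i) /\ is_gradient_l2 (fj Nn beta Lf b i) (gj Nn beta Lf b i)
        /\ (exists L, lipschitz_l2 (gj Nn beta Lf b i) L)).
    { intros i _. split; [apply convex_fj; auto|split; [apply grad_fj; auto|]]. exists (8 * beta + Lf). apply lip_gj; auto. }
    exact (conj S1 (conj S2 (conj S3 (conj S4 (conj S5 (conj S6 (conj S7 (conj (Xs_closed Nn) (conj (Xs_convex Nn)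
      (conj (uu_proper Nn alpha delta C HC1) (conj (uu_closed Nn alpha delta Ha Hdelta C) (conj S8 S9)))))))))))).
  - split.
    + intros p Hp. unfold Pset in Hp. subst p. apply agg_lip; auto. rewrite Hbeta. replace (16 * (4 * q * Lf / 25) ^ 2) with ((256/625) * (q*q) * (Lf*Lf)) by field. replace (Lf ^ 2) with (Lf * Lf) by ring. assert (0 <= q * q <= 1) by (split; nra). assert (0 <= Lf * Lf) by nra. nra.
    + exists p0. split. reflexivity. intros L' HL'. apply agg_sharp; auto.
  - apply uu_modulus; auto.
  - apply xstar_opt; auto; try lra. unfold beta. field. lra.
  - intros t x Hout Hd.
    assert (Hcs: 0 <= / 50 * s) by lra.
    destruct (Rle_dec (ln (1 / eps)) 0) as [Hl|Hl].
    { pose proof (pos_INR t). nra. }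
    apply Rnot_le_lt in Hl.
    pose proof (output_supp Nn beta Lf b alpha delta C HN Hbeta0 HLf0 Ha Hdelta HC1 t x Hout) as Hx.
    destruct (lt_dec (S (S t)) Nn) as [Ht|Ht].
    + assert (Hl2: is_l2 (vsub x (xstar Nn C q))).
      { apply l2_sub; apply (fin_l2 (S Nn)). apply (in_Rm_mono (S (S t))); [lia|auto]. apply Xs_xstar; auto. }
      pose proof (coord_le_norm2 _ (S (S t)) Hl2) as Hc.
      unfold vsub in Hc. rewrite Hx in Hc by lia. unfold xstar in Hc.
      replace (Nat.ltb (S (S t)) Nn) with true in Hc by (symmetry; apply Nat.ltb_lt; auto).
      assert (Hq0: 0 < q) by lra.
      assert (E: (0 - C * q ^ S (S t)) ^ 2 = q ^ (t * 2)).
      { unfold C. rewrite pow_mult. simpl. field. lra. }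
      rewrite E in Hc.
      assert (Hp: 0 < q ^ (t * 2)) by (apply pow_lt; auto).
      assert (Hln: ln (q ^ (t * 2)) <= ln eps).
      { destruct (Rle_lt_or_eq_dec _ _ (Rle_trans _ _ _ Hc Hd)) as [H|H].
        - left. apply ln_increasing; auto.
        - rewrite H. lra. }
      rewrite ln_pow in Hln by auto. rewrite mult_INR in Hln. simpl (INR 2) in Hln.
      assert (Hie: ln (1 / eps) = - ln eps) by (unfold Rdiv; rewrite Rmult_1_l; apply ln_Rinv; auto).
      assert (Hiq: - ln q <= 1 / q - 1).
      { pose proof (ln_le_sub1 (1 / q) ltac:(apply Rdiv_lt_0_compat; lra)).
        unfold Rdiv in H. rewrite Rmult_1_l, ln_Rinv in H by auto. unfold Rdiv. lra. }
      assert (A1: ln (1 / eps) <= 2 * INR t * (1 / q - 1)).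
      { pose proof (pos_INR t). assert (INR t * (- ln q) <= INR t * (1 / q - 1)) by (apply Rmult_le_compat_l; auto). nra. }
      assert (A2: s * (1 / q - 1) = 5 / (2 * q)) by (unfold q; field; split; lra).
      assert (A3: s * ln (1 / eps) <= 2 * INR t * (5 / (2 * q))).
      { rewrite <- A2. assert (s * ln (1 / eps) <= s * (2 * INR t * (1 / q - 1))) by (apply Rmult_le_compat_l; auto). nra. }
      assert (A4: 5 / (2 * q) <= 25).
      { apply (Rmult_le_reg_r (2 * q)); [lra|]. field_simplify; lra. }
      pose proof (pos_INR t). nra.
    + assert (HT: (n0 <= t)%nat) by (unfold Nn in Ht; lia).
      apply le_INR in HT.
      assert (s * ln (1 / eps) <= s * Rabs (ln (1 / eps))) by (apply Rmult_le_compat_l; auto; apply Rle_abs).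
      assert (0 <= s * ln (1 / eps)) by nra.
      nra.
Qed.
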